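(* Let $(G,\cdot)$ and $(H,\circ)$ be loops isotopic under the triple $(A,B,C)$, and suppose the pair satisfies the $\mathcal{T}$ condition with respect to $(A,B,C)$. Then $(G,\cdot)$ is a WIPL if and only if $(H,\circ)$ is a WIPL.
   Context: Maps are written on the right of their arguments ($xU$) and composed left to right: $UV$ means first apply $U$, then $V$. For a loop $(L,\cdot)$ with identity $e$, $x^\rho$ and $x^\lambda$ denote the right and left inverses of $x$ ($x x^\rho=e=x^\lambda x$), and $J_\rho:x\mapsto x^\rho$, $J_\lambda:x\mapsto x^\lambda$, $L_x:y\mapsto xy$, $R_x:y\mapsto yx$ (so $J_\lambda=J_\rho^{-1}$). $L$ is a weak inverse property loop (WIPL) if $xy\cdot z=e$ implies $x\cdot yz=e$ for all $x,y,z\in L$. A triple $(U,V,W)$ of bijections $G\to H$ between loops $(G,\cdot)$ and $(H,\circ)$ is an isotopism if $xU\circ yV=(x\cdot y)W$ for all $x,y\in G$. For the loop $(H,\circ)$ (identity $e'$) the corresponding maps are denoted $J_\rho'$ ($y\mapsto y^{\rho'}$), $J_\lambda'$ ($y\mapsto y^{\lambda'}$), $L_y'$, $R_y'$. The $\mathcal{T}$ condition: if $(G,\cdot)$ and $(H,\circ)$ are loops isotopic under $(A,B,C)$, the pair satisfies the $\mathcal{T}$ condition if $A=B$ and either $J_\rho'=C^{-1}J_\rho B=A^{-1}J_\rho C$ or $J_\lambda'=C^{-1}J_\lambda A=B^{-1}J_\lambda C$. *)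

(* Defs.v *)
From Stdlib Require Import Utf8.

Record loop := Loop {
  carrier :> Type;
  op : carrier -> carrier -> carrier;
  unit : carrier;
  op_unit_l : forall x, op unit x = x;
  op_unit_r : forall x, op x unit = x;
  ldiv_unique : forall a b, exists x, op a x = b /\ forall x', op a x' = b -> x' = x;
  rdiv_unique : forall a b, exists y, op y a = b /\ forall y', op y' a = b -> y' = y
}.

Definition is_rinv (L : loop) (x r : L) : Prop := op L x r = unit L.
Definition is_linv (L : loop) (x l : L) : Prop := op L l x = unit L.

Definition WIPL (L : loop) : Prop :=
  forall x y z : L, op L (op L x y) z = unit L -> op L x (op L y z) = unit L.

Definition bij_with {X Y : Type} (f : X -> Y) (g : Y -> X) : Prop :=
  (forall x, g (f x) = x) /\ (forall y, f (g y) = y).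

Definition isotopism (G H : loop) (U V W : G -> H) : Prop :=
  (exists U', bij_with U U') /\ (exists V', bij_with V V') /\
  (exists W', bij_with W W') /\
  forall x y : G, op H (U x) (V y) = W (op G x y).

(* The T condition for (A,B,C), maps written on the right and composed left
   to right (so C^{-1} J_ρ B : y ↦ B((C^{-1} y)^ρ)). Expressed pointwise:
     A = B and either
       J_ρ' = C^{-1} J_ρ B = A^{-1} J_ρ C   or   J_λ' = C^{-1} J_λ A = B^{-1} J_λ C. *)
Definition T_condition (G H : loop) (A B C : G -> H) : Prop :=
  exists (Ainv Binv Cinv : H -> G),
    bij_with A Ainv /\ bij_with B Binv /\ bij_with C Cinv /\
    (forall x, A x = B x) /\
    ( (forall (y : H) (r : G),
          is_rinv G (Cinv y) r -> is_rinv H y (B r)) /\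
      (forall (y : H) (r : G),
          is_rinv G (Ainv y) r -> is_rinv H y (C r))
    \/
      (forall (y : H) (l : G),
          is_linv G (Cinv y) l -> is_linv H y (A l)) /\
      (forall (y : H) (l : G),
          is_linv G (Binv y) l -> is_linv H y (C l)) ).

(* Main.v *)
Require Import Defs.
From Stdlib Require Import Setoid.

Lemma lcancel (L : loop) (a u v : L) : op L a u = op L a v -> u = v.
Proof.
  intros E. destruct (ldiv_unique L a (op L a v)) as [w [_ Hw]].
  rewrite (Hw u E), (Hw v eq_refl). reflexivity.
Qed.

Lemma rcancel (L : loop) (a u v : L) : op L u a = op L v a -> u = v.
Proof.
  intros E. destruct (rdiv_unique L a (op L v a)) as [w [_ Hw]].
  rewrite (Hw u E), (Hw v eq_refl). reflexivity.
Qed.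

Lemma rinv_ex (L : loop) (x : L) : exists r, op L x r = unit L.
Proof. destruct (ldiv_unique L x (unit L)) as [r [Hr _]]. eauto. Qed.

Lemma linv_ex (L : loop) (x : L) : exists l, op L l x = unit L.
Proof. destruct (rdiv_unique L x (unit L)) as [r [Hr _]]. eauto. Qed.

Lemma WIPL_rho (L : loop) : WIPL L <->
  forall x y r s : L, op L (op L x y) r = unit L -> op L x s = unit L -> op L y r = s.
Proof.
  split.
  - intros W x y r s H1 H2. apply (lcancel L x). rewrite H2. apply W; exact H1.
  - intros Hr x y z H1. destruct (rinv_ex L x) as [s Hs].
    rewrite (Hr x y z s H1 Hs). exact Hs.
Qed.

Lemma WIPL_conv (L : loop) : WIPL L ->
  forall x y z : L, op L x (op L y z) = unit L -> op L (op L x y) z = unit L.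
Proof.
  intros W x y z H1. destruct (rinv_ex L (op L x y)) as [w Hw].
  assert (E : op L x (op L y w) = unit L) by (apply W; exact Hw).
  rewrite <- H1 in E. apply lcancel in E. apply lcancel in E. subst. exact Hw.
Qed.

Lemma WIPL_lam (L : loop) : WIPL L <->
  forall x y l m : L, op L l (op L x y) = unit L -> op L m y = unit L -> op L l x = m.
Proof.
  split.
  - intros W x y l m H1 H2. apply (rcancel L y). rewrite H2.
    apply WIPL_conv; assumption.
  - intros Hl x y z H1. destruct (linv_ex L (op L y z)) as [l Hl'].
    assert (E : op L l y = op L x y) by (apply Hl with (y := z); assumption).
    apply rcancel in E. subst. exact Hl'.
Qed.

Theorem mainTheorem6 (G H : loop) (A B C : G -> H) :
  isotopism G H A B C ->
  T_condition G H A B C ->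
  (WIPL G <-> WIPL H).
Proof.
  intros [_ [_ [_ Iso]]] [Ai [Bi [Ci [[Ai1 Ai2] [[Bi1 Bi2] [[Ci1 Ci2] [AB Hc]]]]]]].
  unfold is_rinv, is_linv in Hc.
  destruct Hc as [[c1 c2] | [c3 c4]].
  - rewrite !WIPL_rho. split.
    + intros W a b r s H1 H2.
      set (x := Ai a). set (y := Bi b).
      assert (Eab : op H a b = C (op G x y)).
      { rewrite <- Iso. unfold x, y. rewrite Ai2, Bi2. reflexivity. }
      destruct (rinv_ex G (op G x y)) as [t Ht].
      assert (Ht' : op H (op H a b) (B t) = unit H).
      { rewrite Eab. apply c1. rewrite Ci1. exact Ht. }
      assert (Er : r = B t).
      { apply (lcancel H (op H a b)). rewrite H1, Ht'. reflexivity. }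
      destruct (rinv_ex G x) as [u Hu].
      assert (Hu' : op H a (C u) = unit H) by (apply c2; exact Hu).
      assert (Es : s = C u).
      { apply (lcancel H a). rewrite H2, Hu'. reflexivity. }
      subst r s. replace b with (A y) by (rewrite AB; unfold y; apply Bi2).
      rewrite Iso. f_equal. apply (W x y t u Ht Hu).
    + intros W x y t u H1 H2.
      assert (E1 : op H (op H (A x) (B y)) (B t) = unit H).
      { rewrite Iso. apply c1. rewrite Ci1. exact H1. }
      assert (E2 : op H (A x) (C u) = unit H).
      { apply c2. rewrite Ai1. exact H2. }
      pose proof (W _ _ _ _ E1 E2) as E. rewrite <- AB, Iso in E.
      rewrite <- (Ci1 (op G y t)), E, Ci1. reflexivity.
  - rewrite !WIPL_lam. split.
    + intros W a b l m H1 H2.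
      set (x := Ai a). set (y := Bi b).
      assert (Eab : op H a b = C (op G x y)).
      { rewrite <- Iso. unfold x, y. rewrite Ai2, Bi2. reflexivity. }
      destruct (linv_ex G (op G x y)) as [p Hp].
      assert (Hp' : op H (A p) (op H a b) = unit H).
      { rewrite Eab. apply c3. rewrite Ci1. exact Hp. }
      assert (El : l = A p).
      { apply (rcancel H (op H a b)). rewrite H1, Hp'. reflexivity. }
      destruct (linv_ex G y) as [q Hq].
      assert (Hq' : op H (C q) b = unit H) by (apply c4; exact Hq).
      assert (Em : m = C q).
      { apply (rcancel H b). rewrite H2, Hq'. reflexivity. }
      subst l m. replace a with (B x) by (rewrite <- AB; unfold x; apply Ai2).
      rewrite Iso. f_equal. apply (W x y p q Hp Hq).
    + intros W x y p q H1 H2.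
      assert (E1 : op H (A p) (op H (A x) (B y)) = unit H).
      { rewrite Iso. apply c3. rewrite Ci1. exact H1. }
      assert (E2 : op H (C q) (B y) = unit H).
      { apply c4. rewrite Bi1. exact H2. }
      pose proof (W _ _ _ _ E1 E2) as E. rewrite (AB x), Iso in E.
      rewrite <- (Ci1 (op G p x)), E, Ci1. reflexivity.
Qed.
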